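(* Let $\mathcal{C}\subseteq\mathbb{F}^n$ be an $\mathbb{F}$-linear code, and let $\rho_{\mathcal{C}}$, $\rho_{\mathcal{C}^\perp}$ be the rank functions of the sum-matroids associated to $\mathcal{C}$ and $\mathcal{C}^\perp$ respectively. Then for every $\mathcal{L}\in\mathcal{P}(\mathbf{K}^{\mathbf{n}})$, $\rho_{\mathcal{C}}(\mathcal{L}^\perp)+\mathrm{Rk}(\mathcal{L})-\rho_{\mathcal{C}}(\mathbf{K}^{\mathbf{n}})=\rho_{\mathcal{C}^\perp}(\mathcal{L})$; that is, the rank function $\rho_{\mathcal{C}}^*$ of the dual sum-matroid of $M_{\mathcal{C}}$ equals $\rho_{\mathcal{C}^\perp}$.
   Context: Setting: $\ell,n_1,\dots,n_\ell$ positive integers, $K_1,\dots,K_\ell$ finite fields with a common finite extension $\mathbb{F}$, $n=\sum n_i$. $\mathcal{P}(\mathbf{K}^{\mathbf{n}})=\mathcal{P}(K_1^{n_1})\times\cdots\times\mathcal{P}(K_\ell^{n_\ell})$, $\mathcal{P}(K_i^{n_i})$ the lattice of $K_i$-subspaces of $K_i^{n_i}$; orthogonal complements $\mathcal{L}^\perp=(\mathcal{L}_1^\perp,\dots,\mathcal{L}_\ell^\perp)$ componentwise w.r.t. the standard bilinear forms; $\mathrm{Rk}(\mathcal{L})=\sum_i\dim_{K_i}\mathcal{L}_i$; $\mathbf{K}^{\mathbf{n}}=(K_1^{n_1},\dots,K_\ell^{n_\ell})$. $\mathcal{C}^\perp$ is the dual of $\mathcal{C}$ in $\mathbb{F}^n$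 (so $(\mathcal{C}^\perp)^\perp=\mathcal{C}$). For an $\mathbb{F}$-linear code $\mathcal{D}\subseteq\mathbb{F}^n$ and $\mathcal{L}=(\mathcal{L}_1,\dots,\mathcal{L}_\ell)$ with $N_i=\dim_{K_i}\mathcal{L}_i$, $N=\sum N_i$, let $\mathbf{A}_i$ be an $N_i\times n_i$ generator matrix of $\mathcal{L}_i$ over $K_i$, $\mathbf{A}=\mathrm{diag}(\mathbf{A}_1,\dots,\mathbf{A}_\ell)$, $\Pi_{\mathcal{L}}(\mathbf{x})=\mathbf{x}\mathbf{A}^T\in\mathbb{F}^N$, and $\rho_{\mathcal{D}}(\mathcal{L})=\dim_{\mathbb{F}}\Pi_{\mathcal{L}}(\mathcal{D}^\perp)$; $M_{\mathcal{D}}=(\mathbf{K}^{\mathbf{n}},\rho_{\mathcal{D}})$ is the associated sum-matroid. The dual of a sum-matroid with rank function $\rho$ has rank function $\rho^*(\mathcal{L})=\rho(\mathcal{L}^\perp)+\mathrm{Rk}(\mathcal{L})-\rho(\mathbf{K}^{\mathbf{n}})$. *)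

(* Defs.v *)
From HB Require Import structures.
From mathcomp Require Import all_boot all_order all_algebra all_field.
Set Implicit Arguments. Unset Strict Implicit. Unset Printing Implicit Defensive.
Import GRing.Theory.
Local Open Scope ring_scope.

(* An element of
   P(K_i^{n_i}) is represented by a square matrix over K i whose row space is
   the subspace.  A code D <= F^n (n = \sum_i n i) is the row space of a
   matrix D : 'M[F]_(k, \sum_i n i). *)

Section SumMatroid.
Variables (l : nat) (K : 'I_l -> finFieldType) (F : finFieldType)
  (sig : forall i, {rmorphism K i -> F}) (n : 'I_l -> nat).

Definition lattice_elt := forall i : 'I_l, 'M[K i]_(n i).

(* componentwise orthogonal complement w.r.t. the standard bilinear form:
   rows v with v *m (L i)^T = 0, i.e. v . u = 0 for every u in L i *)
Definition lortho (L : lattice_elt) : lattice_elt := fun i => kermx (L i)^T.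

Definition Rk (L : lattice_elt) : nat := \sum_(i < l) \rank (L i).

Definition ltop : lattice_elt := fun i => 1%:M.

Definition dual_code k (D : 'M[F]_(k, \sum_(i < l) n i)) : 'M[F]_(\sum_(i < l) n i) :=
  kermx D^T.

(* the block-diagonal matrix A = diag(A_1,...,A_l) where A_i = row_base (L i)
   is an (N_i x n_i) generator matrix of L_i over K_i, mapped into F *)
Definition genA (L : lattice_elt) :
  'M[F]_(\sum_(i < l) \rank (L i), \sum_(i < l) n i) :=
  mxblock (fun (i j : 'I_l) =>
    match @eqP _ i j return 'M[F]_(\rank (L i), n j) with
    | ReflectT e => castmx (erefl, congr1 n e) (map_mx (sig i) (row_base (L i)))
    | ReflectF _ => 0
    end).

(* rho_D(L) = dim_F Pi_L(D^perp), Pi_L(x) = x A^T *)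
Definition rho k (D : 'M[F]_(k, \sum_(i < l) n i)) (L : lattice_elt) : nat :=
  \rank (dual_code D *m (genA L)^T).

Definition dual_rank (r : lattice_elt -> nat) (L : lattice_elt) : int :=
  (r (lortho L))%:Z + (Rk L)%:Z - (r ltop)%:Z.

End SumMatroid.

(* Main.v *)
Require Import Defs.
From HB Require Import structures.
From mathcomp Require Import all_boot all_order all_algebra all_field.
From mathcomp Require Import zify.
Set Implicit Arguments. Unset Strict Implicit. Unset Printing Implicit Defensive.
Import GRing.Theory.
Local Open Scope ring_scope.

Definition bent (T : nmodType) (l : nat) (p_ q_ : 'I_l -> nat)
  (D : forall i, 'M[T]_(p_ i, q_ i)) (i j : 'I_l) : 'M[T]_(p_ i, q_ j) :=
  match @eqP _ i j return 'M[T]_(p_ i, q_ j) with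
  | ReflectT e => castmx (erefl, congr1 q_ e) (D i)
  | ReflectF _ => 0
  end.

Arguments bent : simpl never.

Definition bdiag (T : nmodType) (l : nat) (p_ q_ : 'I_l -> nat)
  (D : forall i, 'M[T]_(p_ i, q_ i)) := mxblock (bent D).

Lemma bent_id (T : nmodType) (l : nat) (p_ q_ : 'I_l -> nat)
  (D : forall i, 'M[T]_(p_ i, q_ i)) i : bent D i i = D i.
Proof.
rewrite /bent; case: eqP => // e.
by rewrite (eq_irrelevance e erefl) castmx_id.
Qed.

Lemma bent_neq (T : nmodType) (l : nat) (p_ q_ : 'I_l -> nat)
  (D : forall i, 'M[T]_(p_ i, q_ i)) i j : i != j -> bent D i j = 0.
Proof. by rewrite /bent; case: eqP. Qed.

Lemma bdiag_mul (R : pzRingType) (l : nat) (p_ q_ r_ : 'I_l -> nat)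
  (D : forall i, 'M[R]_(p_ i, q_ i)) (E : forall i, 'M[R]_(q_ i, r_ i)) :
  bdiag D *m bdiag E = bdiag (fun i => D i *m E i).
Proof.
rewrite /bdiag (mul_mxblock (bent D) (bent E)).
apply: eq_mxblock => i k; rewrite -[RHS]/(bent (fun i => D i *m E i) i k).
rewrite (bigD1 i) // big1 /= => [|j /negbTE nji]; last first.
  by rewrite bent_neq ?mul0mx // eq_sym nji.
rewrite addr0 bent_id; case: (eqVneq i k) => [e|ne].
  by subst; rewrite !bent_id.
by rewrite !bent_neq // mulmx0.
Qed.

Lemma bdiag_tr (T : nmodType) (l : nat) (p_ q_ : 'I_l -> nat)
  (D : forall i, 'M[T]_(p_ i, q_ i)) :
  (bdiag D)^T = bdiag (fun i => (D i)^T).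
Proof.
rewrite /bdiag tr_mxblock; apply: eq_mxblock => i j.
rewrite -[RHS]/(bent (fun i => (D i)^T) i j) -[LHS]/((bent D j i)^T).
case: (eqVneq i j) => [e|ne]; first by subst; rewrite !bent_id.
by rewrite !bent_neq ?trmx0 // eq_sym.
Qed.

Lemma bdiag1 (R : pzRingType) (l : nat) (p_ : 'I_l -> nat) :
  bdiag (fun i => (1%:M : 'M[R]_(p_ i))) = 1%:M.
Proof.
rewrite -(mxdiagZ 1) /bdiag /mxdiag; apply: eq_mxblock => i j.
rewrite -[LHS]/(bent (fun i => (1%:M : 'M[R]_(p_ i))) i j).
case: (eqVneq i j) => [e|ne]; first by subst; rewrite !bent_id conform_mx_id.
by rewrite !bent_neq.
Qed.

Lemma bdiag0 (T : nmodType) (l : nat) (p_ q_ : 'I_l -> nat) :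
  bdiag (fun i => (0 : 'M[T]_(p_ i, q_ i))) = 0.
Proof.
rewrite /bdiag -mxblock0; apply: eq_mxblock => i j.
rewrite -[LHS]/(bent (fun i => (0 : 'M[T]_(p_ i, q_ i))) i j).
case: (eqVneq i j) => [e|ne]; first by subst; rewrite !bent_id.
by rewrite !bent_neq.
Qed.

Lemma eq_bdiag (T : nmodType) (l : nat) (p_ q_ : 'I_l -> nat)
  (D D' : forall i, 'M[T]_(p_ i, q_ i)) : (forall i, D i = D' i) -> bdiag D = bdiag D'.
Proof.
move=> e; rewrite /bdiag; apply: eq_mxblock => i j.
rewrite -[LHS]/(bent D i j) -[RHS]/(bent D' i j).
case: (eqVneq i j) => [ij|ne]; first by subst; rewrite !bent_id.
by rewrite !bent_neq.
Qed.

Lemma bdiag_rank (F : fieldType) (l : nat) (p_ q_ : 'I_l -> nat)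
  (D : forall i, 'M[F]_(p_ i, q_ i)) :
  (forall i, row_free (D i)) -> \rank (bdiag D) = (\sum_i p_ i)%N.
Proof.
move=> fr; apply/eqP; rewrite eqn_leq rank_leq_row /=.
have h i : exists B : 'M[F]_(q_ i, p_ i), D i *m B == 1%:M.
  by case/row_freeP: (fr i) => B hB; exists B; apply/eqP.
pose E i := xchoose (h i).
have hE i : D i *m E i = 1%:M := eqP (xchooseP (h i)).
have := mxrankM_maxl (bdiag D) (bdiag E).
by rewrite bdiag_mul (eq_bdiag hE) bdiag1 mxrank1.
Qed.

Section Main.
Variables (l : nat) (K : 'I_l -> finFieldType) (F : finFieldType)
  (sig : forall i, {rmorphism K i -> F}) (n : 'I_l -> nat).

Lemma genAE (L : lattice_elt K n) :
  genA sig L = bdiag (fun i => map_mx (sig i) (row_base (L i))).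
Proof. by []. Qed.

Lemma rank_genA (L : lattice_elt K n) : \rank (genA sig L) = Rk L.
Proof.
rewrite genAE bdiag_rank // => i.
by rewrite /row_free mxrank_map; exact: row_base_free.
Qed.

Lemma genA_orth (L : lattice_elt K n) :
  genA sig (lortho L) *m (genA sig L)^T = 0.
Proof.
rewrite !genAE bdiag_tr bdiag_mul (@eq_bdiag _ _ _ _ _ (fun i => 0)) ?bdiag0 // => i.
rewrite map_trmx -map_mxM.
suff -> : row_base (lortho L i) *m (row_base (L i))^T = 0 by rewrite map_mx0.
have : (row_base (L i) <= L i)%MS by rewrite eq_row_base.
case/submxP => X ->; rewrite trmx_mul mulmxA.
have -> : row_base (lortho L i) *m (L i)^T = 0.
  by apply/sub_kermxP; rewrite eq_row_base.
by rewrite mul0mx.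
Qed.

Lemma Rk_lortho (L : lattice_elt K n) : (Rk (lortho L) + Rk L = \sum_i n i)%N.
Proof.
rewrite /Rk -big_split /=; apply: eq_bigr => i _.
by rewrite /lortho mxrank_ker mxrank_tr subnK // rank_leq_row.
Qed.

Lemma Rk_top : Rk (ltop K n) = (\sum_i n i)%N.
Proof. by rewrite /Rk; apply: eq_bigr => i _; rewrite /ltop mxrank1. Qed.

End Main.

Section FLin.
Variable (F : fieldType).

Lemma ker_tr_sub m1 m2 N (A : 'M[F]_(m1, N)) (B : 'M[F]_(m2, N)) :
  (A <= B)%MS -> (kermx B^T <= kermx A^T)%MS.
Proof.
case/submxP => X ->; apply/sub_kermxP.
by rewrite trmx_mul mulmxA mulmx_ker mul0mx.
Qed.

Lemma ker_tr_eq m1 m2 N (A : 'M[F]_(m1, N)) (B : 'M[F]_(m2, N)) :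
  (A == B)%MS -> (kermx A^T == kermx B^T)%MS.
Proof.
by case/andP => ab ba; apply/andP; split; apply: ker_tr_sub.
Qed.

Lemma rank_ker_tr m N (A : 'M[F]_(m, N)) : \rank (kermx A^T) = (N - \rank A)%N.
Proof. by rewrite mxrank_ker mxrank_tr. Qed.

Lemma eqmx_subrank m1 m2 N (A : 'M[F]_(m1, N)) (B : 'M[F]_(m2, N)) :
  (A <= B)%MS -> (\rank B <= \rank A)%N -> (A == B)%MS.
Proof.
move=> sAB rBA; have [_ <-] := mxrank_leqif_eq sAB.
by rewrite eqn_leq rBA mxrankS.
Qed.

Lemma ker_ker m N (A : 'M[F]_(m, N)) : (A == kermx (kermx A^T)^T)%MS.
Proof.
apply: eqmx_subrank.
  by apply/sub_kermxP; rewrite -{1}[A]trmxK -trmx_mul mulmx_ker trmx0.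
by rewrite !rank_ker_tr subKn // rank_leq_col.
Qed.

Lemma sub_ker_col p m1 m2 N (X : 'M[F]_(p, N)) (A : 'M[F]_(m1, N)) (B : 'M[F]_(m2, N)) :
  (X <= kermx (col_mx A B)^T)%MS = (X <= kermx A^T)%MS && (X <= kermx B^T)%MS.
Proof. by rewrite !sub_kermx tr_col_mx mul_mx_row row_mx_eq0. Qed.

Lemma ker_col m1 m2 N (A : 'M[F]_(m1, N)) (B : 'M[F]_(m2, N)) :
  (kermx (col_mx A B)^T == kermx A^T :&: kermx B^T)%MS.
Proof.
apply/andP; split.
  by rewrite sub_capmx -sub_ker_col.
by rewrite sub_ker_col capmxSl capmxSr.
Qed.

End FLin.

Unset Implicit Arguments.
Theorem mainTheorem6 (l : nat) (K : 'I_l -> finFieldType) (F : finFieldType)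
  (sig : forall i, {rmorphism K i -> F}) (n : 'I_l -> nat)
  (k : nat) (C : 'M[F]_(k, \sum_(i < l) n i)) (L : lattice_elt K n) :
  dual_rank (rho sig C) L = (rho sig (dual_code C) L)%:Z.
Proof.
rewrite /dual_rank /rho /dual_code.
set N := (\sum_(i < l) n i)%N.
set V := genA sig L; set W := genA sig (lortho L); set T := genA sig (ltop K n).
set Cp := kermx C^T; set Cpp := kermx Cp^T.
have hV : \rank V = Rk L by apply: rank_genA.
have hW : \rank W = Rk (lortho L) by apply: rank_genA.
have hRk := Rk_lortho L.
have hT : \rank T = N by rewrite /T rank_genA Rk_top.
have hWV : (W == kermx V^T)%MS.
  apply: eqmx_subrank; first by apply/sub_kermxP; apply: genA_orth.
  by rewrite rank_ker_tr hV hW -hRk addnK.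
have hkW : (kermx W^T :=: V)%MS.
  apply: eqmx_trans (eqmx_sym (eqmxP (ker_ker V))).
  exact/eqmxP/ker_tr_eq.
have e1 := mxrank_mul_ker Cp W^T.
have x1 : \rank (Cp :&: kermx W^T) = \rank (Cp :&: V).
  by apply: eqmx_rank; apply/eqmxP; apply: cap_eqmx.
have e2 := mxrank_mul_ker Cp T^T.
have x2 : \rank (Cp :&: kermx T^T) = 0%N.
  apply/eqP; rewrite -leqn0; apply: leq_trans (mxrankS (capmxSr _ _)) _.
  by rewrite rank_ker_tr hT subnn.
have e3 := mxrank_mul_ker Cpp V^T.
have e4 := mxrank_sum_cap Cpp (kermx V^T).
have e5 : (\rank (Cpp + kermx V^T) + \rank (Cp :&: V) = N)%N.
  have r1 := rank_ker_tr (col_mx Cpp (kermx V^T)).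
  have r2 : \rank (kermx (col_mx Cpp (kermx V^T))^T) = \rank (Cp :&: V).
    apply: eqmx_rank; apply/eqmxP.
    apply: eqmx_trans (eqmxP (ker_col _ _)) _.
    by apply: cap_eqmx; apply: eqmx_sym; apply/eqmxP; apply: ker_ker.
  have r3 := rank_leq_col (col_mx Cpp (kermx V^T)).
  rewrite addsmxE; lia.
have e6 : \rank Cpp = (N - \rank Cp)%N by apply: rank_ker_tr.
have e7 : (\rank Cp <= N)%N by apply: rank_leq_col.
have e8 : \rank (kermx V^T) = (N - \rank V)%N by apply: rank_ker_tr.
have e9 : (\rank V <= N)%N by apply: rank_leq_col.
have H : (\rank (Cp *m W^T) + Rk L = \rank (Cp *m T^T) + \rank (Cpp *m V^T))%N by lia.
apply/eqP; rewrite subr_eq -!PoszD H addnC.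
by [].
Qed.
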